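(* Let $L$ be a finite archimedean extension of $\mathbb{Z}_\mathrm{max}$. Then $\mathrm{ui}(L/\mathbb{Z}_\mathrm{max})<\infty$.
   Context: A semifield is a commutative semiring in which every nonzero element is a unit. $\mathbb{Z}_\mathrm{max}=\mathbb{Z}\cup\{-\infty\}$ is the semifield with addition $\max$ and multiplication ordinary addition. An extension of a semifield $K$ is a semifield $L$ with an injective homomorphism $K\to L$ (identify $K$ with its image); it is finite if $L$ is a finitely generated $K$-semimodule. For idempotent $K$, the extension is archimedean if for every $x\in L$ there is $y\in K$ with $x+y=y$. The unit index is $\mathrm{ui}(L/K)=|L^\times/K^\times|$. *)

(* Defs.v *)
From HB Require Import structures.
From mathcomp Require Import all_boot all_order all_algebra.
Set Implicit Arguments. Unset Strict Implicit. Unset Printing Implicit Defensive.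
Import Order.TTheory GRing.Theory Num.Theory.
Local Open Scope ring_scope.

(* None represents -oo (the zero of Z_max), Some z represents z : int.  *)
Definition zmax := option int.
HB.instance Definition _ := Choice.on zmax.

Definition zmax_add (x y : zmax) : zmax :=
  match x, y with
  | None, _ => y
  | _, None => x
  | Some a, Some b => Some (Num.max a b)
  end.

Definition zmax_mul (x y : zmax) : zmax :=
  match x, y with
  | Some a, Some b => Some (a + b)
  | _, _ => None
  end.

Lemma zmax_addA : associative zmax_add.
Proof. by case=> [a|] [b|] [c|] //=; rewrite maxA. Qed.
Lemma zmax_addC : commutative zmax_add.
Proof. by case=> [a|] [b|] //=; rewrite maxC. Qed.
Lemma zmax_add0 : left_id (None : zmax) zmax_add.
Proof. by case. Qed.

HB.instance Definition _ := GRing.isNmodule.Build zmax zmax_addA zmax_addC zmax_add0.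

Lemma zmax_mulA : associative zmax_mul.
Proof. by case=> [a|] [b|] [c|] //=; rewrite addrA. Qed.
Lemma zmax_mulC : commutative zmax_mul.
Proof. by case=> [a|] [b|] //=; rewrite addrC. Qed.
Lemma zmax_mul1 : left_id (Some 0%R : zmax) zmax_mul.
Proof. by case=> [a|] //=; rewrite add0r. Qed.
Lemma zmax_mulDl : left_distributive zmax_mul zmax_add.
Proof.
case=> [a|] [b|] [c|] //=; congr Some.
by case: (leP a b) => h; [rewrite max_r ?lerD2r // | rewrite max_l ?lerD2r // ltW].
Qed.
Lemma zmax_mul0 : left_zero (None : zmax) zmax_mul.
Proof. by case. Qed.
Lemma zmax_one_neq0 : (Some 0%R : zmax) != None.
Proof. by []. Qed.

HB.instance Definition _ := GRing.Nmodule_isComNzSemiRing.Build zmax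
  zmax_mulA zmax_mulC zmax_mul1 zmax_mulDl zmax_mul0 zmax_one_neq0.

Definition is_unit (R : comNzSemiRingType) (x : R) : Prop := exists y : R, x * y = 1.

Definition semifield (R : comNzSemiRingType) : Prop :=
  forall x : R, x != 0 -> is_unit x.

Definition extension (K L : comNzSemiRingType) (f : {rmorphism K -> L}) : Prop :=
  semifield K /\ semifield L /\ injective f.

Definition finite_ext (K L : comNzSemiRingType) (f : {rmorphism K -> L}) : Prop :=
  exists (n : nat) (g : 'I_n -> L),
    forall x : L, exists c : 'I_n -> K, x = \sum_(i < n) f (c i) * g i.

(* Archimedean (for idempotent K): every x in L is bounded by some element
   of K, i.e. x + y = y for some y in K. *)
Definition archimedean_ext (K L : comNzSemiRingType) (f : {rmorphism K -> L}) : Prop :=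
  forall x : L, exists y : K, x + f y = f y.

(* ui(L/K) = |L^x / K^x| is finite: there are finitely many cosets of the
   image of K^x in the group L^x, i.e. finitely many representatives r_i
   such that every unit of L lies in some coset r_i * f(K^x). *)
Definition finite_unit_index (K L : comNzSemiRingType) (f : {rmorphism K -> L}) : Prop :=
  exists (n : nat) (r : 'I_n -> L),
    (forall i, is_unit (r i)) /\
    forall u : L, is_unit u -> exists (i : 'I_n) (k : K), is_unit k /\ u = r i * f k.

(* Main.v *)
Require Import Defs.
From HB Require Import structures.
From mathcomp Require Import all_boot all_order all_algebra.
Set Implicit Arguments. Unset Strict Implicit. Unset Printing Implicit Defensive.
Import Order.TTheory GRing.Theory Num.Theory.
Local Open Scope ring_scope.

Definition lel (L : comNzSemiRingType) (x y : L) := x + y = y.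

Section S.
Variables (L : comNzSemiRingType) (f : {rmorphism zmax -> L}).
Definition pw (z : int) : L := f (Some z).

Lemma idem (x : L) : x + x = x.
Proof.
have h : (1:L) + 1 = 1.
  by rewrite -(rmorph1 f) -rmorphD; apply: congr1; by [].
by rewrite -{1 2}[x]mulr1 -mulrDr h mulr1.
Qed.

Lemma pwD a b : pw (a + b) = pw a * pw b.
Proof. by rewrite /pw -rmorphM. Qed.

Lemma pw_max a b : pw a + pw b = pw (Num.max a b).
Proof. by rewrite /pw -rmorphD. Qed.

Lemma pw_le a b : a <= b -> lel (pw a) (pw b).
Proof. by move=> h; rewrite /lel pw_max max_r. Qed.

Lemma fNone : f None = 0.
Proof. exact: (rmorph0 f). Qed.

Lemma pw0 : pw 0 = 1.
Proof. exact: (rmorph1 f). Qed.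

Lemma lel_trans (x y z : L) : lel x y -> lel y z -> lel x z.
Proof. by rewrite /lel => h1 h2; rewrite -h2 addrA h1. Qed.

Lemma lel0 (x : L) : lel 0 x.
Proof. by rewrite /lel add0r. Qed.

Lemma lelM (x y z : L) : lel x y -> lel (x * z) (y * z).
Proof. by rewrite /lel => h; rewrite -mulrDl h. Qed.

Lemma lel_anti (x y : L) : lel x y -> lel y x -> x = y.
Proof. by rewrite /lel => h1 h2; rewrite -h2 addrC h1. Qed.

Lemma lel_sum n (a : 'I_n -> L) s : (forall i, lel (a i) s) -> lel (\sum_i a i) s.
Proof.
move=> h; elim/big_ind: _ => //; first exact: lel0.
by move=> x y hx hy; rewrite /lel -addrA hy.
Qed.

Lemma lel_term n (b : 'I_n -> L) j : lel (b j) (\sum_i b i).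
Proof. by rewrite /lel (bigD1 j) //= addrA idem. Qed.

Lemma sum_absorb n (a b : 'I_n -> L) j :
  (forall i, a i = b i \/ (b i = 0 /\ lel (a i) (b j))) ->
  \sum_i a i = \sum_i b i.
Proof.
move=> h; apply: lel_anti; apply: lel_sum => i; case: (h i).
- by move=> ->; apply: lel_term.
- by move=> [_ hi]; apply: lel_trans hi (lel_term _ _).
- by move=> <-; apply: lel_term.
- by move=> [-> _]; apply: lel0.
Qed.

End S.

Lemma bound_lemma (n : nat) (P : 'I_n -> nat -> Prop) :
  (forall i m m', P i m -> (m <= m')%N -> P i m') ->
  (forall i, exists m, P i m) -> exists M, forall i, P i M.
Proof.
move=> mono ex.
suff: forall k, exists M, forall i : 'I_n, (i < k)%N -> P i M.
  by case/(_ n) => M hM; exists M => i; apply: hM.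
elim=> [|k [M hM]]; first by exists 0%N.
case: (ltnP k n) => hk; last first.
  by exists M => i hi; apply: hM; apply: leq_trans (ltn_ord i) hk.
have [m hm] := ex (Ordinal hk).
exists (maxn M m) => i; rewrite ltnS leq_eqVlt => /orP [/eqP e|hi].
- have -> : i = Ordinal hk by apply: val_inj.
  by apply: mono hm _; apply: leq_maxr.
- by apply: mono (hM _ hi) _; apply: leq_maxl.
Qed.

Theorem mainTheorem6 (L : comNzSemiRingType) (f : {rmorphism zmax -> L}) :
  extension f -> finite_ext f -> archimedean_ext f -> finite_unit_index f.
Proof.
move=> [_ [semL _]] [n [g hg]] arch.
have hA : exists A : nat, forall i, lel (g i) (pw f A%:Z).
  apply: (bound_lemma (P := fun i m => lel (g i) (pw f m%:Z))).
    by move=> i m m' h hm; apply: lel_trans h (pw_le _ _); rewrite lez_nat.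
  move=> i; have [[a|] ha] := arch (g i).
    exists `|a|%N; apply: lel_trans ha (pw_le _ _); exact: lez_abs.
  exists 0%N; move: ha; rewrite fNone addr0 => ->; exact: lel0.
have hB : exists B : nat, forall j, g j != 0 -> lel 1 (pw f B%:Z * g j).
  apply: (bound_lemma (P := fun j m => g j != 0 -> lel 1 (pw f m%:Z * g j))).
    move=> i m m' h hm /h h1; apply: lel_trans h1 (lelM _ _).
    by apply: pw_le; rewrite lez_nat.
  move=> j; case: (eqVneq (g j) 0) => [->|gj0]; first by exists 0%N.
  have [h hh] := semL _ gj0.
  have [[b|] hb] := arch h.
    exists `|b|%N => _; rewrite -hh mulrC.
    apply: lelM; apply: lel_trans hb (pw_le _ _); exact: lez_abs.
  move: hb; rewrite fNone addr0 => h0; move: hh; rewrite h0 mulr0 => /esym/eqP.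
  by rewrite oner_eq0.
have [A hA'] := hA; have [B hB'] := hB.
set M := (A + B)%N.
have hM : forall i j, g j != 0 -> lel (g i) (pw f M%:Z * g j).
  move=> i j gj; apply: lel_trans (hA' i) _.
  rewrite /M PoszD pwD -mulrA -{1}[pw f A%:Z]mulr1 [pw f A%:Z * 1]mulrC.
  by rewrite [pw f A%:Z * _]mulrC; apply: lelM; apply: hB'.
pose D := {ffun 'I_n -> option 'I_M.+1}.
pose dec (o : option 'I_M.+1) : zmax :=
  if o is Some k then Some (- (k : nat)%:Z) else None.
pose rep (d : D) := \sum_i f (dec (d i)) * g i.
pose r (i : 'I_#|{: D}|) := let x := rep (enum_val i) in if x == 0 then 1 else x.
exists #|{: D}|, r; split.
  move=> i; rewrite /r /=; case: eqP => [_|/eqP h]; last exact: semL.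
  by exists 1; rewrite mulr1.
move=> u [v huv]; have [c hc] := hg u.
have u0 : u != 0.
  by apply/eqP => u0; move: huv; rewrite u0 mul0r => /esym/eqP; rewrite oner_eq0.
pose P i := (c i != None) && (g i != 0).
pose key i := odflt 0 (c i).
case: (pickP P) => [j0 Pj0 | nP]; last first.
  case/eqP: u0; rewrite hc big1 // => i _.
  move: (nP i); rewrite /P; case: (c i) => [a|] /=; last by rewrite fNone mul0r.
  by move/negbFE/eqP => ->; rewrite mulr0.
case: (arg_maxP key Pj0) => jm Pjm maxj.
set T := key jm.
pose d : D := [ffun i => if P i && (`|T - key i|%N <= M)%N
                        then Some (inord `|T - key i|%N) else None].
exists (enum_rank d), (Some T : zmax); split.
  by exists (Some (-T)); change (Some (T + - T) = Some 0); rewrite subrr.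
have hrep : u = rep d * f (Some T).
  have djm : f (dec (d jm)) = 1.
    rewrite /d ffunE Pjm /T subrr /= inordK //= oppr0; exact: (rmorph1 f).
  rewrite hc /rep mulr_suml; apply: (sum_absorb f (j := jm)) => i.
  rewrite djm mul1r /d ffunE.
  case hPi: (P i) => /=; last first.
    right; split; first by rewrite fNone !mul0r.
    move: hPi; rewrite /P; case: (c i) => [a|] /= h; last by rewrite fNone mul0r; exact: lel0.
    by move/negbFE/eqP: h => ->; rewrite mulr0; exact: lel0.
  move: (hPi) (maxj i hPi); rewrite /P /key /T.
  case hci: (c i) => [a|] //= gi0 haT.
  have hTa : 0 <= key jm - a by rewrite subr_ge0.
  case: leqP => hle.
    left; rewrite /= inordK ?ltnS // gez0_abs // opprB.
    by rewrite mulrAC -[f (Some (a - _)) * _]/(pw f _ * pw f _) -pwD subrK.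
  right; split; first by rewrite fNone !mul0r.
  have gjm0 : g jm != 0 by case/andP: Pjm.
  have := lelM (pw f a) (hM i jm gjm0).
  rewrite -/(pw f a) mulrC => h; apply: lel_trans h _.
  rewrite mulrAC -pwD [g jm * _]mulrC; apply: lelM.
  apply: pw_le; move: hle; rewrite -(ltz_nat M) gez0_abs // => hle.
  by move: hle; rewrite ltrBrDr addrC => /ltW.
rewrite /r enum_rankK /=; case: eqP => [h0|//].
by case/eqP: u0; rewrite hrep h0 mul0r.
Qed.
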